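(* Let $X$ be a proper geodesic metric space with basepoint $x_0$, and let $\gamma_1,\gamma_2$ be geodesic rays representing different elements of the Morse boundary of $X$. Then $\rho[\gamma_1]\neq\rho[\gamma_2]$, where $\rho[\gamma]=\lim_{t\to\infty}\rho_{\gamma(t)}$ and $\rho_y(z)=d(z,y)-d(x_0,y)$.
   Context: The horofunction map sends $y\in X$ to the function $\rho_y\in C(X)$, $\rho_y(z)=d(z,y)-d(x_0,y)$, where $C(X)$ is the space of continuous real-valued functions on $X$ with the topology of uniform convergence on compact sets; the horofunction compactification $\overline X^h$ is the closure of $\{\rho_y\}$ in $C(X)$. The Morse boundary is the set of Morse geodesic rays up to bounded Hausdorff distance, where a quasi-geodesic $\gamma$ is Morse if there is a non-decreasing continuous $M:\mathbb{R}_{\ge1}\to\mathbb{R}_{\ge0}$ such that every $Q$--quasi-geodesic with endpoints on $\gamma$ stays in the closed $M(Q)$--neighbourhood of the corresponding subsegment. *)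

(* Defs.v *)
From Stdlib Require Import Reals Lra.
Open Scope R_scope.

Definition is_metric {X : Type} (d : X -> X -> R) : Prop :=
  (forall x y, 0 <= d x y) /\
  (forall x y, d x y = 0 <-> x = y) /\
  (forall x y, d x y = d y x) /\
  (forall x y z, d x z <= d x y + d y z).

Definition seq_converges {X : Type} (d : X -> X -> R) (u : nat -> X) (x : X) : Prop :=
  forall eps, 0 < eps -> exists N, forall n, (N <= n)%nat -> d (u n) x < eps.

(** Compactness of a subset of a metric space (sequential compactness, which
    is equivalent to compactness in metric spaces). *)
Definition compact_set {X : Type} (d : X -> X -> R) (K : X -> Prop) : Prop :=
  forall u : nat -> X, (forall n, K (u n)) ->
  exists (phi : nat -> nat) (x : X),
    (forall n m, (n < m)%nat -> (phi n < phi m)%nat) /\ K x /\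
    seq_converges d (fun n => u (phi n)) x.

Definition proper_space {X : Type} (d : X -> X -> R) : Prop :=
  forall (x : X) (r : R), compact_set d (fun y => d x y <= r).

Definition geodesic_space {X : Type} (d : X -> X -> R) : Prop :=
  forall x y : X, exists c : R -> X,
    c 0 = x /\ c (d x y) = y /\
    (forall s t, 0 <= s <= d x y -> 0 <= t <= d x y -> d (c s) (c t) = Rabs (s - t)).

Definition geodesic_ray {X : Type} (d : X -> X -> R) (g : R -> X) : Prop :=
  forall s t, 0 <= s -> 0 <= t -> d (g s) (g t) = Rabs (s - t).

(** Q-quasi-geodesic (i.e. (Q,Q)-quasi-geodesic) defined on [a,b]. *)
Definition quasi_geodesic {X : Type} (d : X -> X -> R) (Q a b : R) (c : R -> X) : Prop :=
  a <= b /\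
  forall s t, a <= s <= b -> a <= t <= b ->
    Rabs (s - t) / Q - Q <= d (c s) (c t) /\ d (c s) (c t) <= Q * Rabs (s - t) + Q.

Definition morse_gauge (M : R -> R) : Prop :=
  (forall Q, 1 <= Q -> 0 <= M Q) /\
  (forall Q Q', 1 <= Q -> Q <= Q' -> M Q <= M Q') /\
  (forall Q, 1 <= Q -> forall eps, 0 < eps -> exists delta, 0 < delta /\
     forall Q', 1 <= Q' -> Rabs (Q' - Q) < delta -> Rabs (M Q' - M Q) < eps).

Definition morse_ray {X : Type} (d : X -> X -> R) (g : R -> X) : Prop :=
  exists M : R -> R, morse_gauge M /\
  forall (Q a b s t : R) (c : R -> X),
    1 <= Q -> 0 <= s -> 0 <= t ->
    quasi_geodesic d Q a b c -> c a = g s -> c b = g t ->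
    forall u, a <= u <= b ->
      exists r, Rmin s t <= r <= Rmax s t /\ d (c u) (g r) <= M Q.

Definition bounded_hausdorff {X : Type} (d : X -> X -> R) (g1 g2 : R -> X) : Prop :=
  exists C, (forall s, 0 <= s -> exists t, 0 <= t /\ d (g1 s) (g2 t) <= C) /\
            (forall t, 0 <= t -> exists s, 0 <= s /\ d (g1 s) (g2 t) <= C).

Definition rho {X : Type} (d : X -> X -> R) (x0 y : X) : X -> R :=
  fun z => d z y - d x0 y.

(** rho_{g(t)} -> f as t -> oo in C(X) (uniform convergence on compact sets). *)
Definition horo_limit {X : Type} (d : X -> X -> R) (x0 : X) (g : R -> X) (f : X -> R) : Prop :=
  forall K : X -> Prop, compact_set d K ->
  forall eps, 0 < eps -> exists T, forall t, T <= t -> forall z, K z ->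
    Rabs (rho d x0 (g t) z - f z) < eps.

(* Main.v *)
Require Import Defs.
From Stdlib Require Import Reals.
From Stdlib Require Import Lra.
Open Scope R_scope.

Lemma RabsL a b : a <= b -> Rabs (a - b) = b - a.
Proof. intros; unfold Rabs; destruct (Rcase_abs _); lra. Qed.
Lemma RabsR a b : b <= a -> Rabs (a - b) = a - b.
Proof. intros; unfold Rabs; destruct (Rcase_abs _); lra. Qed.

Lemma qg_of_bounds (Q C a dd : R) : 1 <= Q -> C <= Q -> 0 <= a ->
  a - C <= dd <= a -> a / Q - Q <= dd /\ dd <= Q * a + Q.
Proof.
  intros HQ HC Ha [H1 H2].
  assert (a / Q <= a).
  { unfold Rdiv. assert (0 < / Q <= 1).
    { split. apply Rinv_0_lt_compat; lra.
      rewrite <- Rinv_1. apply Rinv_le_contravar; lra. }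
    nra. }
  split; nra.
Qed.

Lemma concat (X : Type) (d : X -> X -> R) (Hmet : is_metric d) (Hgeo : geodesic_space d)
  (p m q : X) (C : R) : 0 <= C -> d p m + d m q <= d p q + C ->
  exists P : R -> X, quasi_geodesic d (Rmax 1 C) 0 (d p m + d m q) P /\
    P 0 = p /\ P (d p m + d m q) = q /\ P (d p m) = m.
Proof.
  intros HC Hdef.
  destruct Hmet as (Hpos & Hzero & Hsym & Htri).
  destruct (Hgeo p m) as (c1 & c10 & c1A & c1i).
  destruct (Hgeo m q) as (c2 & c20 & c2B & c2i).
  set (A := d p m) in *. set (B := d m q) in *.
  assert (HA : 0 <= A) by apply Hpos.
  assert (HB : 0 <= B) by apply Hpos.
  exists (fun u => if Rle_dec u A then c1 u else c2 (u - A)).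
  assert (claim : forall s t, 0 <= s <= A + B -> 0 <= t <= A + B ->
     Rabs (s - t) - C <= d (if Rle_dec s A then c1 s else c2 (s - A))
                            (if Rle_dec t A then c1 t else c2 (t - A)) <= Rabs (s - t)).
  {
    assert (mixed : forall s t, 0 <= s <= A -> A < t <= A + B ->
       t - s - C <= d (c1 s) (c2 (t - A)) <= t - s).
    { intros s t Hs Ht.
      assert (E1 : d p (c1 s) = s).
      { rewrite <- c10. rewrite c1i by lra. rewrite RabsL; lra. }
      assert (E2 : d (c1 s) m = A - s).
      { rewrite <- c1A. rewrite c1i by lra. rewrite RabsL; lra. }
      assert (E3 : d m (c2 (t - A)) = t - A).
      { rewrite <- c20 at 1. rewrite c2i by lra. rewrite RabsL; lra. }
      assert (E4 : d (c2 (t - A)) q = B - (t - A)).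
      { rewrite <- c2B. rewrite c2i by lra. rewrite RabsL; lra. }
      pose proof (Htri (c1 s) m (c2 (t - A))).
      pose proof (Htri p (c1 s) q).
      pose proof (Htri (c1 s) (c2 (t - A)) q).
      lra. }
    intros s t Hs Ht.
    destruct (Rle_dec s A); destruct (Rle_dec t A).
    - rewrite c1i by lra. lra.
    - rewrite RabsL by lra. apply (mixed s t); lra.
    - rewrite Hsym. rewrite RabsR by lra. apply (mixed t s); lra.
    - rewrite c2i by lra. replace (s - A - (t - A)) with (s - t) by ring. lra. }
  split; [|split; [|split]].
  - split; [lra|]. intros s t Hs Ht.
    apply (qg_of_bounds _ C).
    + apply Rmax_l.
    + apply Rmax_r.
    + apply Rabs_pos.
    + apply claim; auto.
  - destruct (Rle_dec 0 A); [apply c10 | lra].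
  - destruct (Rle_dec (A + B) A).
    + replace (A + B) with A by lra. rewrite c1A. rewrite <- c20.
      replace B with 0 in c2B by lra. rewrite c2B. reflexivity.
    + replace (A + B - A) with B by ring. apply c2B.
  - destruct (Rle_dec A A); [apply c1A | lra].
Qed.

Lemma singleton_compact (X : Type) (d : X -> X -> R) (Hmet : is_metric d) (p : X) :
  compact_set d (fun z => z = p).
Proof.
  intros u Hu. exists (fun n => n), p. split; [auto|split; [reflexivity|]].
  intros eps Heps. exists O. intros n _. rewrite Hu.
  destruct Hmet as (_ & Hz & _). rewrite (proj2 (Hz p p) eq_refl). lra.
Qed.

Lemma key (X : Type) (d : X -> X -> R) (x0 : X)
  (Hmet : is_metric d) (Hgeo : geodesic_space d) (g1 g2 : R -> X)
  (Hr1 : geodesic_ray d g1) (Hr2 : geodesic_ray d g2) (Hm2 : morse_ray d g2)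
  (f : X -> R) (Hf1 : horo_limit d x0 g1 f) (Hf2 : horo_limit d x0 g2 f) :
  exists K, forall s, 0 <= s -> exists r, 0 <= r /\ d (g1 s) (g2 r) <= K.
Proof.
  destruct Hm2 as (M & _ & Hmorse).
  pose proof Hmet as (Hpos & Hzero & Hsym & Htri).
  set (c1 := d x0 (g1 0)). set (c2 := d x0 (g2 0)).
  set (C := 2 + 2 * c1 + 2 * c2).
  assert (Hc1 : 0 <= c1) by apply Hpos.
  assert (Hc2 : 0 <= c2) by apply Hpos.
  exists (M (Rmax 1 C)). intros s Hs.
  destruct (Hf1 _ (singleton_compact X d Hmet (g1 s)) 1 ltac:(lra)) as [T1 HT1].
  destruct (Hf2 _ (singleton_compact X d Hmet (g1 s)) 1 ltac:(lra)) as [T2 HT2].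
  set (t1 := Rmax T1 s).
  assert (Ht1s : s <= t1) by apply Rmax_r.
  specialize (HT1 t1 (Rmax_l _ _) (g1 s) eq_refl).
  set (t := Rmax T2 0).
  assert (Ht0 : 0 <= t) by apply Rmax_r.
  specialize (HT2 t (Rmax_l _ _) (g1 s) eq_refl).
  unfold rho in HT1, HT2.
  assert (E1 : d (g1 s) (g1 t1) = t1 - s) by (rewrite Hr1 by lra; apply RabsL; lra).
  assert (E2 : d (g1 0) (g1 t1) = t1) by (rewrite Hr1 by lra; rewrite RabsL; lra).
  assert (E3 : d (g2 0) (g2 t) = t) by (rewrite Hr2 by lra; rewrite RabsL; lra).
  assert (E4 : d (g1 0) (g1 s) = s) by (rewrite Hr1 by lra; rewrite RabsL; lra).
  pose proof (Htri (g1 0) x0 (g1 t1)).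
  pose proof (Htri x0 (g2 0) (g2 t)).
  pose proof (Htri (g2 0) x0 (g1 s)).
  pose proof (Htri x0 (g1 0) (g1 s)).
  rewrite (Hsym (g1 0) x0) in *. rewrite (Hsym (g2 0) x0) in *.
  apply Rabs_def2 in HT1. apply Rabs_def2 in HT2.
  assert (Hdef : d (g2 0) (g1 s) + d (g1 s) (g2 t) <= d (g2 0) (g2 t) + C).
  { unfold C, c1, c2 in *. lra. }
  assert (HC : 0 <= C) by (unfold C; lra).
  destruct (concat X d Hmet Hgeo _ _ _ C HC Hdef) as (P & Hq & HP0 & HPb & HPA).
  assert (HA : 0 <= d (g2 0) (g1 s)) by apply Hpos.
  assert (HB : 0 <= d (g1 s) (g2 t)) by apply Hpos.
  destruct (Hmorse (Rmax 1 C) 0 _ 0 t P (Rmax_l _ _) (Rle_refl 0) Ht0 Hq HP0 HPb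
              (d (g2 0) (g1 s)) ltac:(lra)) as (r & Hr & Hdr).
  exists r. split.
  - pose proof (Rmin_glb 0 t 0 ltac:(lra) Ht0). unfold Rmin in *.
    destruct (Rle_dec 0 t); lra.
  - rewrite HPA in Hdr. exact Hdr.
Qed.

Theorem lemma5p5 (X : Type) (d : X -> X -> R) (x0 : X)
  (Hmet : is_metric d) (Hprop : proper_space d) (Hgeo : geodesic_space d)
  (g1 g2 : R -> X)
  (Hr1 : geodesic_ray d g1) (Hr2 : geodesic_ray d g2)
  (Hm1 : morse_ray d g1) (Hm2 : morse_ray d g2)
  (Hdiff : ~ bounded_hausdorff d g1 g2)
  (f1 f2 : X -> R)
  (Hf1 : horo_limit d x0 g1 f1) (Hf2 : horo_limit d x0 g2 f2) :
  f1 <> f2.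
Proof.
  intros Heq. subst f2. apply Hdiff.
  destruct (key X d x0 Hmet Hgeo g1 g2 Hr1 Hr2 Hm2 f1 Hf1 Hf2) as [K1 HK1].
  destruct (key X d x0 Hmet Hgeo g2 g1 Hr2 Hr1 Hm1 f1 Hf2 Hf1) as [K2 HK2].
  pose proof Hmet as (_ & _ & Hsym & _).
  exists (Rmax K1 K2). split.
  - intros s Hs. destruct (HK1 s Hs) as (r & Hr & Hd). exists r. split; auto.
    pose proof (Rmax_l K1 K2). lra.
  - intros t Ht. destruct (HK2 t Ht) as (r & Hr & Hd). exists r. split; auto.
    rewrite Hsym. pose proof (Rmax_r K1 K2). lra.
Qed.
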